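(* There is an absolute constant $C>0$ such that the following holds. Let $U^*,S,p_{ijk},\widehat p_{ijk},\mathcal{W}_{ijk},\delta_{ijk}$ be as in the context, and let $U\in\mathbb{R}^{n\times r}$ be fixed (independent of $\delta$) with unit-norm columns and $|U_{il}|\le2\|(U^* )^i\|$ for all $i,l$. Fix $q\in[r]$ and unit vectors $a,b,c\in\mathbb{R}^n$ with $|a_i|,|b_i|,|c_i|\le2\|(U^* )^i\|$ for all $i$. Let $B,R$ be the $n\times n$ diagonal matrices with $B_{ii}=\sum_{j,k}\delta_{ijk}\mathcal{W}_{ijk}U_{jq}^2U_{kq}^2$ and $R_{ii}=\sum_{j,k}\delta_{ijk}\mathcal{W}_{ijk}U_{jq}U_{kq}a_jb_k$. Let $\gamma\in(0,1]$. If $m\ge\frac{C}{\gamma^2}n\log(n)S^2$, then with probability at least $1-n^{-10}$, $$\big\|(\langle U_q,a\rangle\langle U_q,b\rangle B-R)c\big\|\le\gamma\sqrt{1-\langle U_q,a\rangle^2\langle U_q,b\rangle^2}.$$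
   Context: $U^*\in\mathbb{R}^{n\times r}$ has orthonormal columns $U^*_l$ and rows $(U^* )^i$; $S=\sum_i\|(U^* )^i\|^{3/2}$; $p_{ijk}=\frac{\|(U^* )^i\|^{3/2}\|(U^* )^j\|^{3/2}+\|(U^* )^j\|^{3/2}\|(U^* )^k\|^{3/2}+\|(U^* )^k\|^{3/2}\|(U^* )^i\|^{3/2}}{3nS^2}$; $\widehat p_{ijk}=\min\{mp_{ijk},1\}$; $\mathcal{W}_{ijk}=1/\widehat p_{ijk}$ if $\widehat p_{ijk}>0$, else $0$; $\delta_{ijk}$ are independent Bernoulli$(\widehat p_{ijk})$ random variables. *)

(* Defs.v *)
From Stdlib Require Import Reals List Arith.
Import ListNotations.
Open Scope R_scope.

Fixpoint sumn (n : nat) (f : nat -> R) : R :=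
  match n with
  | O => 0
  | S n' => sumn n' f + f n'
  end.

Definition vnorm (n : nat) (v : nat -> R) : R := sqrt (sumn n (fun i => v i ^ 2)).

Definition inner (n : nat) (u v : nat -> R) : R := sumn n (fun i => u i * v i).

Definition pow32 (x : R) : R := x * sqrt x.

(* A matrix M in R^{n x r} is a function nat -> nat -> R (row, column). *)
Definition rownorm (r : nat) (Ustar : nat -> nat -> R) (i : nat) : R :=
  vnorm r (fun l => Ustar i l).

Definition Sconst (n r : nat) (Ustar : nat -> nat -> R) : R :=
  sumn n (fun i => pow32 (rownorm r Ustar i)).

Definition p_ijk (n r : nat) (Ustar : nat -> nat -> R) (i j k : nat) : R :=
  let w := fun t => pow32 (rownorm r Ustar t) in
  (w i * w j + w j * w k + w k * w i) / (3 * INR n * (Sconst n r Ustar) ^ 2).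

Definition phat (n r : nat) (Ustar : nat -> nat -> R) (m : nat) (i j k : nat) : R :=
  Rmin (INR m * p_ijk n r Ustar i j k) 1.

Definition Wgt (n r : nat) (Ustar : nat -> nat -> R) (m : nat) (i j k : nat) : R :=
  if Rlt_dec 0 (phat n r Ustar m i j k) then / phat n r Ustar m i j k else 0.

Definition orthonormal_cols (n r : nat) (M : nat -> nat -> R) : Prop :=
  forall l l', (l < r)%nat -> (l' < r)%nat ->
    inner n (fun i => M i l) (fun i => M i l') = if Nat.eqb l l' then 1 else 0.

(* Outcomes of the Bernoulli variables delta_{ijk} *)
Definition outcome := nat -> nat -> nat -> bool.

Definition triples (n : nat) : list (nat * nat * nat) :=
  flat_map (fun i => flat_map (fun j => map (fun k => (i, j, k)) (seq 0 n)) (seq 0 n)) (seq 0 n).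

Definition upd (d : outcome) (t : nat * nat * nat) (v : bool) : outcome :=
  let '(i, j, k) := t in
  fun i' j' k' => if (Nat.eqb i' i && Nat.eqb j' j && Nat.eqb k' k)%bool then v else d i' j' k'.

(* Expectation of F over independent Bernoulli(pr t) variables indexed by ts,
   the remaining coordinates being fixed as in d. *)
Fixpoint expect (pr : nat -> nat -> nat -> R) (ts : list (nat * nat * nat))
    (F : outcome -> R) (d : outcome) : R :=
  match ts with
  | [] => F d
  | t :: ts' =>
      let '(i, j, k) := t in
      pr i j k * expect pr ts' F (upd d t true)
      + (1 - pr i j k) * expect pr ts' F (upd d t false)
  end.

Definition prob (n : nat) (pr : nat -> nat -> nat -> R) (E : outcome -> bool) : R :=
  expect pr (triples n) (fun d => if E d then 1 else 0) (fun _ _ _ => false).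

Definition b2r (b : bool) : R := if b then 1 else 0.

Definition Bdiag (n r : nat) (Ustar : nat -> nat -> R) (m : nat) (U : nat -> nat -> R)
    (q : nat) (d : outcome) (i : nat) : R :=
  sumn n (fun j => sumn n (fun k =>
    b2r (d i j k) * Wgt n r Ustar m i j k * (U j q) ^ 2 * (U k q) ^ 2)).

Definition Rdiag (n r : nat) (Ustar : nat -> nat -> R) (m : nat) (U : nat -> nat -> R)
    (q : nat) (a b : nat -> R) (d : outcome) (i : nat) : R :=
  sumn n (fun j => sumn n (fun k =>
    b2r (d i j k) * Wgt n r Ustar m i j k * U j q * U k q * a j * b k)).

Definition good_event (n r : nat) (Ustar : nat -> nat -> R) (m : nat) (U : nat -> nat -> R)
    (q : nat) (a b c : nat -> R) (gamma : R) (d : outcome) : bool :=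
  let al := inner n (fun j => U j q) a in
  let be := inner n (fun j => U j q) b in
  if Rle_dec
       (vnorm n (fun i => (al * be * Bdiag n r Ustar m U q d i - Rdiag n r Ustar m U q a b d i) * c i))
       (gamma * sqrt (1 - al ^ 2 * be ^ 2))
  then true else false.

(* Main.v *)
Require Import Defs.
From Stdlib Require Import Reals Lra Psatz Lia List Arith FunctionalExtensionality.
Import ListNotations.
Open Scope R_scope.

Lemma sumn_ext n f g : (forall i, (i < n)%nat -> f i = g i) -> sumn n f = sumn n g.
Proof. induction n; simpl; intros H; auto. rewrite IHn; [rewrite H|]; auto; intros; apply H; lia. Qed.

Lemma sumn_plus n f g : sumn n (fun i => f i + g i) = sumn n f + sumn n g.
Proof. induction n; simpl; [lra|]. rewrite IHn; lra. Qed.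

Lemma sumn_scal n c f : sumn n (fun i => c * f i) = c * sumn n f.
Proof. induction n; simpl; [lra|]. rewrite IHn; lra. Qed.

Lemma sumn_zero n : sumn n (fun _ => 0) = 0.
Proof. induction n; simpl; [lra|]. rewrite IHn; lra. Qed.

Lemma sumn_minus n f g : sumn n (fun i => f i - g i) = sumn n f - sumn n g.
Proof. induction n; simpl; [lra|]. rewrite IHn; lra. Qed.

Lemma sumn_nonneg n f : (forall i, (i < n)%nat -> 0 <= f i) -> 0 <= sumn n f.
Proof. induction n; simpl; intros H; [lra|]. assert (0 <= f n) by (apply H; lia).
 assert (0 <= sumn n f) by (apply IHn; intros; apply H; lia). lra. Qed.

Lemma sumn_le n f g : (forall i, (i < n)%nat -> f i <= g i) -> sumn n f <= sumn n g.
Proof. induction n; simpl; intros H; [lra|]. assert (f n <= g n) by (apply H; lia).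
 assert (sumn n f <= sumn n g) by (apply IHn; intros; apply H; lia). lra. Qed.

Lemma sumn_point n i0 c : (i0 < n)%nat -> sumn n (fun i => if Nat.eqb i i0 then c else 0) = c.
Proof. induction n; simpl; intros H; [lia|].
 destruct (Nat.eq_dec i0 n).
 - subst. rewrite Nat.eqb_refl. rewrite (sumn_ext n _ (fun _ => 0)). rewrite sumn_zero; lra.
   intros i Hi. destruct (Nat.eqb_spec i n); [lia|auto].
 - rewrite IHn by lia. destruct (Nat.eqb_spec n i0); [lia|lra]. Qed.

Lemma sumn_term_le n f i0 : (forall i, (i < n)%nat -> 0 <= f i) -> (i0 < n)%nat -> f i0 <= sumn n f.
Proof. intros H Hi.
 rewrite <- (sumn_point n i0 (f i0)) by auto. apply sumn_le. intros i Hi'.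
 destruct (Nat.eqb_spec i i0); subst; [lra|]. apply H; auto. Qed.

Lemma sumn_swap n m f : sumn n (fun i => sumn m (fun j => f i j)) = sumn m (fun j => sumn n (fun i => f i j)).
Proof. induction n; simpl. rewrite sumn_zero; auto. rewrite IHn. rewrite <- sumn_plus. auto. Qed.

Lemma sumn_prod n m f g : sumn n (fun j => sumn m (fun k => f j * g k)) = sumn n f * sumn m g.
Proof. rewrite (sumn_ext n _ (fun j => f j * sumn m g)). rewrite <- (Rmult_comm (sumn m g)).
 rewrite <- sumn_scal. apply sumn_ext; intros; ring.
 intros; apply sumn_scal. Qed.

Lemma sumn_point2 n j0 k0 c f : (j0 < n)%nat -> (k0 < n)%nat ->
  sumn n (fun j => sumn n (fun k => f j k + (if (Nat.eqb j j0 && Nat.eqb k k0)%bool then c else 0)))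
  = sumn n (fun j => sumn n (fun k => f j k)) + c.
Proof. intros Hj Hk.
 rewrite (sumn_ext n _ (fun j => sumn n (fun k => f j k) + (if Nat.eqb j j0 then c else 0))).
 rewrite sumn_plus, sumn_point; auto.
 intros j _. rewrite sumn_plus. f_equal. destruct (Nat.eqb j j0); simpl.
 apply sumn_point; auto. apply sumn_zero. Qed.

Lemma expect_cons pr i j k ts F d : expect pr ((i,j,k)::ts) F d =
  pr i j k * expect pr ts F (upd d (i,j,k) true) + (1 - pr i j k) * expect pr ts F (upd d (i,j,k) false).
Proof. reflexivity. Qed.

Lemma expect_ext pr ts F G : (forall d, F d = G d) -> forall d, expect pr ts F d = expect pr ts G d.
Proof. induction ts as [|[[i j] k] ts IH]; intros H d; [simpl; auto|rewrite !expect_cons]. rewrite !IH; auto. Qed.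

Lemma expect_lin pr ts F G a b : forall d,
  expect pr ts (fun d => a * F d + b * G d) d = a * expect pr ts F d + b * expect pr ts G d.
Proof. induction ts as [|[[i j] k] ts IH]; intros d; [simpl; auto|rewrite !expect_cons]. rewrite !IH; ring. Qed.

Lemma expect_const pr ts c : forall d, expect pr ts (fun _ => c) d = c.
Proof. induction ts as [|[[i j] k] ts IH]; intros d; [simpl; auto|rewrite !expect_cons]. rewrite !IH; ring. Qed.

Lemma expect_mono pr ts F G : (forall i j k, 0 <= pr i j k <= 1) ->
  (forall d, F d <= G d) -> forall d, expect pr ts F d <= expect pr ts G d.
Proof. intros Hp. induction ts as [|[[i j] k] ts IH]; intros H d; [simpl; auto|rewrite !expect_cons].
 specialize (Hp i j k). pose proof (IH H (upd d (i,j,k) true)). pose proof (IH H (upd d (i,j,k) false)).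
 nra. Qed.

Definition teqb (t t' : nat * nat * nat) : bool :=
  let '(i,j,k) := t in let '(i',j',k') := t' in (Nat.eqb i i' && Nat.eqb j j' && Nat.eqb k k')%bool.

Lemma teqb_spec t t' : teqb t t' = true <-> t = t'.
Proof. destruct t as [[i j] k]; destruct t' as [[i' j'] k']; simpl.
 rewrite !Bool.andb_true_iff, !Nat.eqb_eq. split. intros [[-> ->] ->]; auto.
 intros H; inversion H; auto. Qed.

Lemma upd_comm d t t' v v' : t <> t' -> upd (upd d t v) t' v' = upd (upd d t' v') t v.
Proof. destruct t as [[i j] k]; destruct t' as [[i' j'] k']; simpl; intros Hne.
 apply functional_extensionality; intro x; apply functional_extensionality; intro y;
 apply functional_extensionality; intro z.
 destruct (Nat.eqb_spec x i'), (Nat.eqb_spec y j'), (Nat.eqb_spec z k'),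
          (Nat.eqb_spec x i), (Nat.eqb_spec y j), (Nat.eqb_spec z k); simpl; subst; auto.
 exfalso; auto. Qed.

Lemma upd_upd d t v v' : upd (upd d t v) t v' = upd d t v'.
Proof. destruct t as [[i j] k]; simpl.
 apply functional_extensionality; intro x; apply functional_extensionality; intro y;
 apply functional_extensionality; intro z.
 destruct (Nat.eqb x i && Nat.eqb y j && Nat.eqb z k)%bool; auto. Qed.

Lemma expect_upd pr ts F t b : ~ In t ts -> forall d,
  expect pr ts F (upd d t b) = expect pr ts (fun d' => F (upd d' t b)) d.
Proof. induction ts as [|[[i j] k] ts IH]; intros Hn d; [simpl; auto|rewrite !expect_cons].
 simpl in Hn. assert (t <> (i,j,k)) by (intro; subst; tauto). assert (~ In t ts) by tauto.
 rewrite !(upd_comm _ t (i,j,k)) by auto. rewrite !IH; auto. Qed.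

Lemma Rabs_le_inv a b : Rabs a <= b -> -b <= a <= b.
Proof. unfold Rabs; destruct (Rcase_abs a); lra. Qed.

Lemma exp_quad x : -1/2 <= x <= 1/2 -> exp x <= 1 + x + 2*x^2.
Proof. intros Hx. pose proof (exp_ineq1_le (-x)). rewrite exp_Ropp in H.
 pose proof (exp_pos x). set (E := exp x) in *.
 assert (E * (1 - x) <= 1).
 { apply Rmult_le_compat_l with (r := E) in H; [|lra]. rewrite Rinv_r in H by lra. lra. }
 nra. Qed.

Lemma two_point p g0 D Dl lam : 0<=p<=1 -> Rabs D <= Dl -> 0 <= lam -> (p < 1 -> lam*Dl <= 1/2) ->
 p * exp(lam*(g0 + D)) + (1-p)*exp(lam*g0) <= exp(lam*(g0 + p*D) + 2*lam^2*(p*(1-p)*Dl^2)).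
Proof. intros Hp HD Hl Hc.
 replace (lam*(g0 + D)) with (lam*(g0+p*D) + lam*(1-p)*D) by ring.
 replace (lam*g0) with (lam*(g0+p*D) + (- (lam*p*D))) by ring.
 rewrite !exp_plus. pose proof (exp_pos (lam*(g0+p*D))). set (E := exp (lam * (g0 + p * D))) in *.
 assert (p * exp (lam*(1-p)*D) + (1-p) * exp (- (lam*p*D)) <= exp (2 * lam ^ 2 * (p * (1 - p) * Dl ^ 2))).
 { destruct (Req_dec p 1).
   - subst. replace (lam*(1-1)*D) with 0 by ring. replace (2 * lam ^ 2 * (1 * (1 - 1) * Dl ^ 2)) with 0 by ring.
     rewrite exp_0. lra.
   - assert (lam * Dl <= 1/2) by (apply Hc; lra).
     assert (Rabs (lam * D) <= 1/2).
     { rewrite Rabs_mult, Rabs_pos_eq by lra. apply Rle_trans with (lam*Dl); auto. apply Rmult_le_compat_l; lra. }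
     apply Rabs_le_inv in H2.
     assert (-1/2 <= lam*(1-p)*D <= 1/2) by nra.
     assert (-1/2 <= - (lam*p*D) <= 1/2) by nra.
     pose proof (exp_quad _ H3). pose proof (exp_quad _ H4).
     pose proof (exp_ineq1_le (2 * lam ^ 2 * (p * (1 - p) * Dl ^ 2))).
     assert (D^2 <= Dl^2). { apply Rabs_le_inv in HD. nra. }
     assert (0 <= p*(1-p)) by nra.
     assert (p * (1 + lam * (1 - p) * D + 2 * (lam * (1 - p) * D) ^ 2) + (1-p) * (1 + - (lam * p * D) + 2 * (- (lam * p * D)) ^ 2)
             = 1 + 2*lam^2*(p*(1-p))*D^2) by ring.
     assert (lam^2 * (p*(1-p)) * D^2 <= lam^2*(p*(1-p))*Dl^2).
     { apply Rmult_le_compat_l; auto. apply Rmult_le_pos; nra. }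
     nra. }
 nra. Qed.

Fixpoint lsum (g : nat*nat*nat -> R) (ts : list (nat*nat*nat)) : R :=
  match ts with [] => 0 | t :: ts' => g t + lsum g ts' end.

Definition vterm (pr Dl : nat -> nat -> nat -> R) (t : nat*nat*nat) : R :=
  let '(i,j,k) := t in pr i j k * (1 - pr i j k) * Dl i j k ^ 2.

Lemma exp_mart pr F Dl lam ts : (forall i j k, 0<=pr i j k<=1) -> 0 <= lam -> NoDup ts ->
 (forall i j k, In (i,j,k) ts -> forall d, Rabs (F (upd d (i,j,k) true) - F (upd d (i,j,k) false)) <= Dl i j k) ->
 (forall i j k, In (i,j,k) ts -> pr i j k < 1 -> lam * Dl i j k <= 1/2) ->
 forall d, expect pr ts (fun d => exp (lam * F d)) d <= exp (lam * expect pr ts F d + 2*lam^2 * lsum (vterm pr Dl) ts).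
Proof. intros Hp Hl. induction ts as [|[[i j] k] ts IH]; intros Hnd HD Hc d.
 - simpl. right. f_equal. ring.
 - rewrite !expect_cons. inversion Hnd; subst.
   assert (IH' : forall d, expect pr ts (fun d => exp (lam * F d)) d <= exp (lam * expect pr ts F d + 2*lam^2 * lsum (vterm pr Dl) ts)).
   { apply IH; auto; intros; [apply HD|apply Hc]; simpl; auto. }
   pose proof (IH' (upd d (i,j,k) true)). pose proof (IH' (upd d (i,j,k) false)).
   pose proof (Hp i j k) as Hpk.
   set (g1 := expect pr ts F (upd d (i, j, k) true)) in *.
   set (g0 := expect pr ts F (upd d (i, j, k) false)) in *.
   set (V := lsum (vterm pr Dl) ts) in *.
   assert (HD1 : Rabs (g1 - g0) <= Dl i j k).
   { unfold g1, g0. rewrite !expect_upd by auto.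
     replace (expect pr ts (fun d' => F (upd d' (i, j, k) true)) d - expect pr ts (fun d' => F (upd d' (i, j, k) false)) d)
       with (expect pr ts (fun d' => 1 * F (upd d' (i, j, k) true) + (-1) * F (upd d' (i, j, k) false)) d)
       by (rewrite expect_lin; ring).
     apply Rabs_le. split.
     - rewrite <- (expect_const pr ts (- Dl i j k) d) at 1. apply expect_mono; auto.
       intros d'. pose proof (HD i j k (or_introl eq_refl) d'). apply Rabs_le_inv in H3. lra.
     - rewrite <- (expect_const pr ts (Dl i j k) d). apply expect_mono; auto.
       intros d'. pose proof (HD i j k (or_introl eq_refl) d'). apply Rabs_le_inv in H3. lra. }
   pose proof (two_point (pr i j k) g0 (g1 - g0) (Dl i j k) lam Hpk HD1 Hl (Hc i j k (or_introl eq_refl))).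
   replace (g0 + (g1 - g0)) with g1 in H3 by ring.
   apply Rle_trans with (exp (2*lam^2*V) * (pr i j k * exp (lam * g1) + (1 - pr i j k) * exp (lam * g0))).
   { rewrite !exp_plus in H, H0. pose proof (exp_pos (2*lam^2*V)). nra. }
   apply Rle_trans with (exp (2*lam^2*V) * exp (lam * (g0 + pr i j k * (g1 - g0)) + 2 * lam ^ 2 * (pr i j k * (1 - pr i j k) * Dl i j k ^ 2))).
   { apply Rmult_le_compat_l; auto. left; apply exp_pos. }
   rewrite <- exp_plus. right. f_equal. change (lsum (vterm pr Dl) ((i,j,k)::ts)) with (vterm pr Dl (i,j,k) + V). unfold vterm. ring.
Qed.

Definition mem (t : nat*nat*nat) ts := existsb (teqb t) ts.

Lemma mem_In t ts : mem t ts = true <-> In t ts.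
Proof. unfold mem. rewrite existsb_exists. split.
 - intros [x [Hx Ht]]. apply teqb_spec in Ht. subst; auto.
 - intros H. exists t; split; auto. apply teqb_spec; auto. Qed.

Definition xb (pr : nat -> nat -> nat -> R) ts (d : outcome) i j k :=
  if mem (i,j,k) ts then pr i j k else b2r (d i j k).

Definition Mv n pr (v : nat -> nat -> nat -> R) ts d i :=
  sumn n (fun j => sumn n (fun k => xb pr ts d i j k * v i j k)).

Lemma Mv_upd n pr v ts i0 j0 k0 b d i : (j0 < n)%nat -> (k0 < n)%nat -> ~ In (i0,j0,k0) ts ->
  Mv n pr v ts (upd d (i0,j0,k0) b) i =
  Mv n pr v ((i0,j0,k0)::ts) d i + (if Nat.eqb i i0 then (b2r b - pr i0 j0 k0) * v i0 j0 k0 else 0).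
Proof. intros Hj Hk Hn. unfold Mv. rewrite <- (sumn_point2 n j0 k0 (if Nat.eqb i i0 then (b2r b - pr i0 j0 k0) * v i0 j0 k0 else 0)) by auto.
 apply sumn_ext; intros j _; apply sumn_ext; intros k _.
 unfold xb, upd. unfold mem at 2. simpl existsb. fold (mem (i,j,k) ts).
 destruct (Nat.eqb_spec i i0), (Nat.eqb_spec j j0), (Nat.eqb_spec k k0); simpl; subst;
 try (assert (Hm : mem (i0,j0,k0) ts = false) by (destruct (mem (i0,j0,k0) ts) eqn:E; auto; apply mem_In in E; tauto); rewrite Hm);
 try ring; destruct (mem _ ts); ring. Qed.

Lemma sq_point n M i0 y : (i0 < n)%nat ->
  sumn n (fun i => (M i + (if Nat.eqb i i0 then y else 0))^2) = sumn n (fun i => (M i)^2) + (2 * M i0 * y + y^2).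
Proof. intros H. rewrite <- (sumn_point n i0 (2 * M i0 * y + y^2)) by auto. rewrite <- sumn_plus.
 apply sumn_ext; intros i _. destruct (Nat.eqb_spec i i0); subst; ring. Qed.

Lemma second_moment n pr v ts : NoDup ts -> (forall i j k, In (i,j,k) ts -> (i<n/\j<n/\k<n)%nat) ->
 forall d, expect pr ts (fun d => sumn n (fun i => (Mv n pr v [] d i)^2)) d =
   sumn n (fun i => (Mv n pr v ts d i)^2) + lsum (vterm pr v) ts.
Proof. induction ts as [|[[i0 j0] k0] ts IH]; intros Hnd Hr d.
 - simpl. ring.
 - rewrite expect_cons. inversion Hnd; subst.
   destruct (Hr i0 j0 k0 (or_introl eq_refl)) as [Hi [Hj Hk]].
   rewrite !IH; auto; try (intros; apply Hr; simpl; auto).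
   rewrite (sumn_ext n (fun i => (Mv n pr v ts (upd d (i0,j0,k0) true) i)^2)
     (fun i => (Mv n pr v ((i0,j0,k0)::ts) d i + (if Nat.eqb i i0 then (b2r true - pr i0 j0 k0) * v i0 j0 k0 else 0))^2))
     by (intros; rewrite Mv_upd; auto).
   rewrite (sumn_ext n (fun i => (Mv n pr v ts (upd d (i0,j0,k0) false) i)^2)
     (fun i => (Mv n pr v ((i0,j0,k0)::ts) d i + (if Nat.eqb i i0 then (b2r false - pr i0 j0 k0) * v i0 j0 k0 else 0))^2))
     by (intros; rewrite Mv_upd; auto).
   rewrite !sq_point by auto.
   change (lsum (vterm pr v) ((i0,j0,k0)::ts)) with (vterm pr v (i0,j0,k0) + lsum (vterm pr v) ts).
   unfold vterm, b2r. ring.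
Qed.

Definition nsum {A} (l : list A) (h : A -> R) := fold_right (fun x acc => h x + acc) 0 l.

Lemma nsum_seq n h : nsum (seq 0 n) h = sumn n h.
Proof. induction n; auto. rewrite seq_S. unfold nsum in *. rewrite fold_right_app. simpl.
 rewrite <- IHn. simpl.
 assert (forall l c, fold_right (fun x acc => h x + acc) c l = fold_right (fun x acc => h x + acc) 0 l + c).
 { induction l; intros; simpl; [ring|]. rewrite IHl; ring. }
 rewrite H. ring. Qed.

Lemma lsum_app g l1 l2 : lsum g (l1 ++ l2) = lsum g l1 + lsum g l2.
Proof. induction l1; simpl; [ring|]. rewrite IHl1; ring. Qed.

Lemma lsum_flat_map {A} g (f : A -> list (nat*nat*nat)) l : lsum g (flat_map f l) = nsum l (fun x => lsum g (f x)).
Proof. induction l; simpl; auto. rewrite lsum_app, IHl. auto. Qed.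

Lemma lsum_map {A} g (f : A -> nat*nat*nat) l : lsum g (map f l) = nsum l (fun x => g (f x)).
Proof. induction l; simpl; auto. rewrite IHl. auto. Qed.

Lemma nsum_ext {A} (l : list A) h1 h2 : (forall x, h1 x = h2 x) -> nsum l h1 = nsum l h2.
Proof. intros H; induction l; simpl; auto. rewrite IHl, H; auto. Qed.

Lemma lsum_triples n g : lsum g (triples n) =
  sumn n (fun i => sumn n (fun j => sumn n (fun k => g (i,j,k)))).
Proof. unfold triples. rewrite lsum_flat_map, <- nsum_seq. apply nsum_ext. intros i.
 rewrite lsum_flat_map, <- nsum_seq. apply nsum_ext. intros j.
 rewrite lsum_map, <- nsum_seq. auto. Qed.

Lemma In_triples n i j k : In (i,j,k) (triples n) <-> (i < n /\ j < n /\ k < n)%nat.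
Proof. unfold triples. rewrite in_flat_map. split.
 - intros [i' [Hi' H]]. rewrite in_flat_map in H. destruct H as [j' [Hj' H]].
   rewrite in_map_iff in H. destruct H as [k' [E Hk']]. inversion E; subst.
   apply in_seq in Hi'; apply in_seq in Hj'; apply in_seq in Hk'. lia.
 - intros [Hi [Hj Hk]]. exists i; split; [apply in_seq; lia|]. rewrite in_flat_map.
   exists j; split; [apply in_seq; lia|]. rewrite in_map_iff. exists k; split; auto. apply in_seq; lia. Qed.

Lemma NoDup_flat_map' {A B} (f : A -> list B) l : NoDup l -> (forall x, NoDup (f x)) ->
  (forall x y z, In z (f x) -> In z (f y) -> x = y) -> NoDup (flat_map f l).
Proof. intros Hl Hf Hd. induction l; simpl; [constructor|]. inversion Hl; subst.
 apply NoDup_app; auto. intros z Hz Hz'. apply in_flat_map in Hz'. destruct Hz' as [y [Hy Hz']].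
 rewrite (Hd a y z Hz Hz') in H1. auto. Qed.

Lemma NoDup_triples n : NoDup (triples n).
Proof. unfold triples. apply NoDup_flat_map'. apply seq_NoDup.
 - intros i. apply NoDup_flat_map'. apply seq_NoDup.
   + intros j. apply NoDup_map_NoDup_ForallPairs. intros x y _ _ H; inversion H; auto. apply seq_NoDup.
   + intros x y z H1 H2. apply in_map_iff in H1, H2. destruct H1 as [? [E1 _]]; destruct H2 as [? [E2 _]].
     subst. inversion E2; auto.
 - intros x y z H1 H2. apply in_flat_map in H1, H2. destruct H1 as [? [_ H1]]; destruct H2 as [? [_ H2]].
   apply in_map_iff in H1, H2. destruct H1 as [? [E1 _]]; destruct H2 as [? [E2 _]]. subst. inversion E2; auto.
Qed.

Lemma Rabs_le_inv_helper a b : Rabs a <= b -> -b <= a <= b.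
Proof. unfold Rabs; destruct (Rcase_abs a); lra. Qed.

Lemma amgm3 A B C : 0 <= A -> 0 <= B -> 0 <= C -> 3*(A*B*C) <= A^3 + B^3 + C^3.
Proof. intros. assert (A^3+B^3+C^3 - 3*(A*B*C) = (A+B+C)*((A-B)^2+(B-C)^2+(C-A)^2)/2) by field.
 assert (0 <= (A+B+C)*((A-B)^2+(B-C)^2+(C-A)^2)) by (apply Rmult_le_pos; [lra|]; assert (0 <= (A-B)^2) by apply pow2_ge_0; assert (0 <= (B-C)^2) by apply pow2_ge_0; assert (0 <= (C-A)^2) by apply pow2_ge_0; lra). lra. Qed.

Lemma num_ge ri rj rk : 0 <= ri -> 0 <= rj -> 0 <= rk ->
  3*(ri*rj*rk) <= (ri*sqrt ri)*(rj*sqrt rj) + (rj*sqrt rj)*(rk*sqrt rk) + (rk*sqrt rk)*(ri*sqrt ri).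
Proof. intros. pose proof (sqrt_sqrt ri H). pose proof (sqrt_sqrt rj H0). pose proof (sqrt_sqrt rk H1).
 pose proof (sqrt_pos ri). pose proof (sqrt_pos rj). pose proof (sqrt_pos rk).
 set (x := sqrt ri) in *. set (y := sqrt rj) in *. set (z := sqrt rk) in *.
 rewrite <- H2, <- H3, <- H4.
 pose proof (amgm3 (x*y) (y*z) (z*x)). replace ((x*x)*x*((y*y)*y) + (y*y)*y*((z*z)*z) + (z*z)*z*((x*x)*x))
   with ((x*y)^3 + (y*z)^3 + (z*x)^3) by ring.
 replace (x*x*(y*y)*(z*z)) with ((x*y)*(y*z)*(z*x)) by ring. apply H8; nra. Qed.

Lemma sq_le_w rj : 0 <= rj <= 1 -> rj^2 <= rj * sqrt rj.
Proof. intros. pose proof (sqrt_sqrt rj (proj1 H)). pose proof (sqrt_pos rj).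
 set (y := sqrt rj) in *. rewrite <- H0. assert (y <= 1) by nra. assert (0 <= y*y*y) by (apply Rmult_le_pos; [apply Rmult_le_pos|]; auto). assert (0 <= y*y*y*(1-y)) by (apply Rmult_le_pos; lra). replace ((y*y)^2) with (y*y*y*y) by ring. nra. Qed.

Lemma triple_bounds ri rj rk N S mm ci uj uk e :
  0 <= ri <= 1 -> 0 <= rj <= 1 -> 0 <= rk <= 1 -> 0 < N -> 0 < S -> 0 < mm ->
  Rabs ci <= 2*ri -> Rabs uj <= 2*rj -> Rabs uk <= 2*rk ->
  let wi := ri * sqrt ri in let wj := rj * sqrt rj in let wk := rk * sqrt rk in
  let ph := Rmin (mm * ((wi*wj + wj*wk + wk*wi) / (3 * N * S^2))) 1 in
  let W := if Rlt_dec 0 ph then / ph else 0 in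
  let coef := ci*uj*uk*e in
  let M := N*S^2/mm in
  ph * (1 - ph) * (W*coef)^2 <= 48*M*ci^2*e^2 /\
  (ph < 1 -> Rabs (W*coef) <= 8*M*Rabs e) /\
  ph * (W*coef) = coef.
Proof. intros Hi Hj Hk HN HS Hm Hc Hu Hv wi wj wk ph W coef M.
 pose proof (num_ge ri rj rk (proj1 Hi) (proj1 Hj) (proj1 Hk)) as Hnum. fold wi wj wk in Hnum.
 set (num := wi*wj + wj*wk + wk*wi) in *.
 assert (Hw : forall r, 0 <= r -> 0 <= r * sqrt r) by (intros; apply Rmult_le_pos; auto; apply sqrt_pos).
 pose proof (Hw ri (proj1 Hi)). pose proof (Hw rj (proj1 Hj)). pose proof (Hw rk (proj1 Hk)).
 fold wi wj wk in H, H0, H1.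
 assert (Hn0 : 0 <= num) by (unfold num; nra).
 assert (HD : 0 < 3*N*S^2) by (apply Rmult_lt_0_compat; [lra| apply pow_lt; lra]).
 assert (Hc3 : Rabs (ci*uj*uk) <= 8*(ri*rj*rk)).
 { rewrite !Rabs_mult. pose proof (Rabs_pos ci). pose proof (Rabs_pos uj). pose proof (Rabs_pos uk).
   assert (Rabs ci * Rabs uj <= 2*ri*(2*rj)) by (apply Rmult_le_compat; auto).
   replace (8*(ri*rj*rk)) with (2*ri*(2*rj)*(2*rk)) by ring. apply Rmult_le_compat; auto. nra. }
 assert (HM : M = N*S^2/mm) by auto.
 assert (Hph0 : 0 <= ph).
 { unfold ph, Rmin. destruct (Rle_dec _ _); [|lra]. apply Rmult_le_pos; [lra|]. unfold Rdiv. apply Rmult_le_pos; auto. left; apply Rinv_0_lt_compat; auto. }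
 assert (Hph1 : ph <= 1) by (unfold ph; apply Rmin_r).
 destruct (Rlt_dec 0 ph) as [Hp|Hp].
 2:{ assert (ph = 0) by lra. unfold W. destruct (Rlt_dec 0 ph); [lra|].
     assert (Hz : mm * (num / (3 * N * S ^ 2)) = 0).
     { unfold ph, Rmin in H2. destruct (Rle_dec _ _); lra. }
     assert (num = 0).
     { apply Rmult_integral in Hz. destruct Hz; [lra|]. unfold Rdiv in H3. apply Rmult_integral in H3.
       destruct H3; auto. pose proof (Rinv_0_lt_compat _ HD). lra. }
     assert (ci*uj*uk = 0).
     { assert (Rabs (ci*uj*uk) <= 0) by lra. pose proof (Rabs_pos (ci*uj*uk)).
       apply Rabs_le_inv_helper in H4. lra. }
     unfold coef. rewrite H4. repeat split; try lra.
     - replace ((0*(0*e))^2) with 0 by ring. rewrite Rmult_0_r. assert (0 <= M) by (rewrite HM; unfold Rdiv; apply Rmult_le_pos; [apply Rmult_le_pos;[lra|apply pow_le;lra]|left; apply Rinv_0_lt_compat; auto]).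
       assert (0 <= ci^2) by apply pow2_ge_0. assert (0 <= e^2) by apply pow2_ge_0. apply Rmult_le_pos; [apply Rmult_le_pos; [apply Rmult_le_pos|]|]; lra.
     - intros. replace (0*(0*e)) with 0 by ring. rewrite Rabs_R0. assert (0 <= M) by (rewrite HM; unfold Rdiv; apply Rmult_le_pos; [apply Rmult_le_pos;[lra|apply pow_le;lra]|left; apply Rinv_0_lt_compat; auto]).
       pose proof (Rabs_pos e). nra. }
 unfold W. destruct (Rlt_dec 0 ph); [|lra].
 assert (HZ : ph * (/ ph * coef) = coef) by (field; lra).
 assert (Hnp : 0 < num).
 { destruct Hn0; auto. unfold ph in Hp. rewrite <- H2 in Hp. unfold Rdiv in Hp. rewrite Rmult_0_l, Rmult_0_r in Hp.
   unfold Rmin in Hp. destruct (Rle_dec _ _); lra. }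
 set (K := 3*N*S^2/mm).
 assert (HK : 0 < K) by (unfold K; unfold Rdiv; apply Rmult_lt_0_compat; auto; apply Rinv_0_lt_compat; auto).
 assert (HMK : M = K/3) by (rewrite HM; unfold K; field; lra).
 assert (Hsmall : ph < 1 -> ph = mm * (num / (3 * N * S ^ 2))).
 { intros. unfold ph, Rmin in *. destruct (Rle_dec _ _); lra. }
 assert (Hinv : ph < 1 -> / ph = K / num).
 { intros. rewrite Hsmall by auto. unfold K. field. repeat split; try lra. }
 split; [|split; auto].
 - destruct (Req_dec ph 1).
   + rewrite H2. replace (1 - 1) with 0 by ring. rewrite Rmult_0_r, Rmult_0_l.
     assert (0 <= M) by lra.
     assert (0 <= ci^2) by apply pow2_ge_0. assert (0 <= e^2) by apply pow2_ge_0. apply Rmult_le_pos; [apply Rmult_le_pos; [apply Rmult_le_pos|]|]; lra.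
   + assert (ph < 1) by lra.
     replace (ph * (1 - ph) * (/ ph * coef) ^ 2) with ((1-ph) * (coef^2 * / ph)) by (field; lra).
     rewrite Hinv by auto.
     assert (Hc2 : coef^2 <= 16*ci^2*e^2*num).
     { unfold coef. apply Rabs_le_inv_helper in Hu. apply Rabs_le_inv_helper in Hv.
       assert (uj^2 <= 4*wj). { pose proof (sq_le_w rj Hj). fold wj in H4. nra. }
       assert (uk^2 <= 4*wk). { pose proof (sq_le_w rk Hk). fold wk in H5. nra. }
       assert (uj^2*uk^2 <= 16*num).
       { assert (uj^2*uk^2 <= (4*wj)*(4*wk)) by (apply Rmult_le_compat; auto; apply pow2_ge_0). unfold num. nra. }
       replace ((ci*uj*uk*e)^2) with ((ci^2*e^2)*(uj^2*uk^2)) by ring.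
       replace (16*ci^2*e^2*num) with ((ci^2*e^2)*(16*num)) by ring.
       apply Rmult_le_compat_l; auto. apply Rmult_le_pos; apply pow2_ge_0. }
     assert (coef^2 * (K/num) <= 16*ci^2*e^2*K).
     { replace (coef^2 * (K/num)) with (coef^2/num * K) by (field; lra). replace (16*ci^2*e^2*K) with ((16*ci^2*e^2*num)/num*K) by (field; lra).
       apply Rmult_le_compat_r; [lra|]. unfold Rdiv. apply Rmult_le_compat_r; auto. left; apply Rinv_0_lt_compat; auto. }
     assert (0 <= coef^2 * (K/num)) by (apply Rmult_le_pos; [apply pow2_ge_0| unfold Rdiv; apply Rmult_le_pos; [lra|left; apply Rinv_0_lt_compat; auto]]).
     rewrite HMK. nra.
 - intros Hl. rewrite Rabs_mult. rewrite Hinv by auto. rewrite Rabs_pos_eq by (unfold Rdiv; apply Rmult_le_pos; [lra|left; apply Rinv_0_lt_compat; auto]).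
   unfold coef. rewrite (Rabs_mult (ci*uj*uk) e). pose proof (Rabs_pos e). pose proof (Rabs_pos (ci*uj*uk)).
   assert (3*Rabs (ci*uj*uk) <= 8 * num) by lra.
   rewrite HMK. replace (K / num * (Rabs (ci * uj * uk) * Rabs e)) with ((3*Rabs (ci*uj*uk)) * (K/3/num) * Rabs e) by (field; lra).
   replace (8 * (K/3) * Rabs e) with ((8*num) * (K/3/num) * Rabs e) by (field; lra).
   apply Rmult_le_compat_r; auto. apply Rmult_le_compat_r; auto. unfold Rdiv. apply Rmult_le_pos; [lra|left; apply Rinv_0_lt_compat; auto].
Qed.

Lemma sumsq_nonneg n f : 0 <= sumn n (fun i => f i ^ 2).
Proof. apply sumn_nonneg; intros; apply pow2_ge_0. Qed.

Lemma vnorm_pert n y i0 x : (i0 < n)%nat ->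
  Rabs (vnorm n (fun i => y i + (if Nat.eqb i i0 then x else 0)) - vnorm n y) <= Rabs x.
Proof. intros Hi. unfold vnorm. rewrite sq_point by auto.
 set (N := sumn n (fun i => y i ^ 2)).
 assert (HN : 0 <= N) by apply sumsq_nonneg.
 assert (Hy : y i0 ^ 2 <= N) by (apply (sumn_term_le n (fun i => y i ^2)); auto; intros; apply pow2_ge_0).
 set (A := sqrt N). assert (HA : 0 <= A) by apply sqrt_pos. assert (HA2 : A^2 = N) by (apply pow2_sqrt; auto).
 assert (Hya : -A <= y i0 <= A) by (split; nra). pose proof (Rabs_pos x).
 assert (Hx2 : x^2 = Rabs x ^2) by (rewrite pow2_abs; auto).
 apply Rabs_le. split.
 - assert ((A - Rabs x)^2 <= N + (2 * y i0 * x + x^2)).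
   { rewrite <- HA2. destruct (Rle_or_lt 0 x) as [Hx|Hx]; [rewrite Rabs_pos_eq by lra | rewrite Rabs_left by lra]; nra. }
   apply sqrt_le_1_alt in H0. fold A.
   destruct (Rle_or_lt 0 (A - Rabs x)).
   + rewrite sqrt_pow2 in H0 by auto. lra.
   + pose proof (sqrt_pos (N + (2 * y i0 * x + x ^ 2))). lra.
 - assert (N + (2 * y i0 * x + x^2) <= (A + Rabs x)^2).
   { rewrite <- HA2. destruct (Rle_or_lt 0 x) as [Hx|Hx]; [rewrite Rabs_pos_eq by lra | rewrite Rabs_left by lra]; nra. }
   apply sqrt_le_1_alt in H0. rewrite sqrt_pow2 in H0 by lra. fold A. lra.
Qed.

Lemma rownorm_le1 n r Ustar i0 : orthonormal_cols n r Ustar -> (i0 < n)%nat -> rownorm r Ustar i0 <= 1.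
Proof. intros Ho Hi. unfold rownorm, vnorm.
 set (v := fun l => Ustar i0 l).
 set (R2 := sumn r (fun l => v l ^ 2)).
 set (x := fun a => sumn r (fun l => v l * Ustar a l)).
 assert (H0 : 0 <= sumn n (fun a => ((if Nat.eqb a i0 then 1 else 0) - x a)^2)) by apply sumsq_nonneg.
 assert (E1 : sumn n (fun a => ((if Nat.eqb a i0 then 1 else 0) - x a)^2) =
   sumn n (fun a => if Nat.eqb a i0 then 1 else 0) - 2 * sumn n (fun a => if Nat.eqb a i0 then x a else 0)
   + sumn n (fun a => x a * x a)).
 { rewrite <- sumn_scal, <- sumn_minus, <- sumn_plus. apply sumn_ext; intros a _.
   destruct (Nat.eqb a i0); ring. }
 rewrite sumn_point in E1 by auto.
 rewrite (sumn_ext n (fun a => if Nat.eqb a i0 then x a else 0) (fun a => if Nat.eqb a i0 then x i0 else 0)) in E1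
   by (intros a _; destruct (Nat.eqb_spec a i0); subst; auto).
 rewrite sumn_point in E1 by auto.
 assert (E2 : x i0 = R2) by (unfold x, R2, v; apply sumn_ext; intros; ring).
 assert (E3 : sumn n (fun a => x a * x a) = R2).
 { unfold x. rewrite (sumn_ext n _ (fun a => sumn r (fun l => sumn r (fun l' => (v l * Ustar a l) * (v l' * Ustar a l')))))
     by (intros; rewrite sumn_prod; auto).
   rewrite sumn_swap.
   rewrite (sumn_ext r _ (fun l => sumn r (fun l' => v l * v l' * (if Nat.eqb l l' then 1 else 0)))).
   - unfold R2. apply sumn_ext; intros l Hl.
     rewrite (sumn_ext r _ (fun l' => if Nat.eqb l' l then v l ^ 2 else 0)).
     + apply sumn_point; auto.
     + intros l' _. destruct (Nat.eqb_spec l l'), (Nat.eqb_spec l' l); subst; try lia; ring.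
   - intros l Hl. rewrite sumn_swap. apply sumn_ext; intros l' Hl'.
     rewrite <- (Ho l l' Hl Hl'). unfold inner. rewrite <- sumn_scal. apply sumn_ext; intros; ring. }
 rewrite E2, E3 in E1.
 assert (R2 <= 1) by lra.
 rewrite <- sqrt_1. apply sqrt_le_1_alt. auto.
Qed.

Lemma Rinv_nonneg x : 0 <= x -> 0 <= / x.
Proof. intros [H|H]. left; apply Rinv_0_lt_compat; auto. subst; rewrite Rinv_0; lra. Qed.

Lemma pow32_nonneg x : 0 <= x -> 0 <= pow32 x.
Proof. intros; unfold pow32; apply Rmult_le_pos; auto; apply sqrt_pos. Qed.

Lemma rownorm_nonneg r U i : 0 <= rownorm r U i.
Proof. unfold rownorm, vnorm. apply sqrt_pos. Qed.

Lemma Sconst_nonneg n r U : 0 <= Sconst n r U.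
Proof. unfold Sconst. apply sumn_nonneg. intros; apply pow32_nonneg, rownorm_nonneg. Qed.

Lemma phat_range n r Ustar m i j k : 0 <= phat n r Ustar m i j k <= 1.
Proof. unfold phat. split; [|apply Rmin_r].
 unfold Rmin. destruct (Rle_dec _ _); [|lra]. apply Rmult_le_pos; [apply pos_INR|].
 unfold p_ijk. cbv beta zeta. unfold Rdiv. apply Rmult_le_pos.
 - pose proof (pow32_nonneg _ (rownorm_nonneg r Ustar i)). pose proof (pow32_nonneg _ (rownorm_nonneg r Ustar j)).
   pose proof (pow32_nonneg _ (rownorm_nonneg r Ustar k)).
   set (x := pow32 (rownorm r Ustar i)) in *. set (y := pow32 (rownorm r Ustar j)) in *. set (z := pow32 (rownorm r Ustar k)) in *.
   assert (0 <= x*y) by (apply Rmult_le_pos; auto). assert (0 <= y*z) by (apply Rmult_le_pos; auto). assert (0 <= z*x) by (apply Rmult_le_pos; auto). lra.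
 - apply Rinv_nonneg. pose proof (pos_INR n). pose proof (Sconst_nonneg n r Ustar).
   apply Rmult_le_pos; [lra|]. apply pow_le; auto. Qed.

Lemma prob_nonneg n pr E : (forall i j k, 0 <= pr i j k <= 1) -> 0 <= prob n pr E.
Proof. intros H. unfold prob. apply Rle_trans with (expect pr (triples n) (fun _ => 0) (fun _ _ _ => false)).
 rewrite expect_const; lra.
 apply expect_mono; auto. intros d; cbv beta; destruct (E d); lra. Qed.

Lemma sum1 n f : vnorm n f = 1 -> sumn n (fun i => f i ^ 2) = 1.
Proof. unfold vnorm. intros H. rewrite <- (pow2_sqrt (sumn n (fun i => f i ^ 2))) by apply sumsq_nonneg.
 rewrite H. ring. Qed.

Lemma ln_ge_half n : (2 <= n)%nat -> 1/2 <= ln (INR n).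
Proof. intros Hn.
 assert (Hl2 : 1/2 < ln 2).
 { rewrite <- (ln_exp (1/2)). apply ln_increasing. apply exp_pos.
   assert (exp (1/2) * exp (1/2) = exp 1) by (rewrite <- exp_plus; f_equal; lra).
   pose proof exp_le_3. pose proof (exp_pos (1/2)). nra. }
 apply le_INR in Hn. simpl in Hn. replace (1+1) with 2 in Hn by ring.
 destruct Hn as [Hn|Hn]. pose proof (ln_increasing 2 (INR n) ltac:(lra) Hn). lra. rewrite <- Hn. lra. Qed.

Lemma lsum_ext g h ts : (forall t, g t = h t) -> lsum g ts = lsum h ts.
Proof. intros H; induction ts; simpl; auto. rewrite IHts, H; auto. Qed.

Lemma vnorm_ext n f g : (forall i, (i < n)%nat -> f i = g i) -> vnorm n f = vnorm n g.
Proof. intros H. unfold vnorm. f_equal. apply sumn_ext. intros; rewrite H; auto. Qed.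

Lemma main_n2 n r Ustar U q a b c gamma m :
 (2 <= n)%nat -> orthonormal_cols n r Ustar -> (forall l, (l<r)%nat -> vnorm n (fun i => U i l) = 1) ->
 (forall i l, (i<n)%nat -> (l<r)%nat -> Rabs (U i l) <= 2*rownorm r Ustar i) -> (q<r)%nat ->
 vnorm n a = 1 -> vnorm n b = 1 -> vnorm n c = 1 ->
 (forall i, (i<n)%nat -> Rabs (c i) <= 2*rownorm r Ustar i) -> 0 < gamma <= 1 ->
 INR m >= 8192 / gamma^2 * INR n * ln (INR n) * Sconst n r Ustar ^2 ->
 prob n (phat n r Ustar m) (good_event n r Ustar m U q a b c gamma) >= 1 - / (INR n ^ 10).
Proof.
 intros Hn2 Ho HU HUb Hq Ha Hb Hc Hcb Hg Hm.
 set (ph := phat n r Ustar m). set (S := Sconst n r Ustar). set (rho := rownorm r Ustar).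
 assert (Hph : forall i j k, 0 <= ph i j k <= 1) by (intros; apply phat_range).
 assert (Hrho : forall i, (i<n)%nat -> 0 <= rho i <= 1).
 { intros; split; [apply rownorm_nonneg|apply (rownorm_le1 n); auto]. }
 assert (HU1 : sumn n (fun j => U j q ^2) = 1) by (apply (sum1 n (fun i => U i q)); auto).
 assert (Ha1 : sumn n (fun j => a j ^2) = 1) by (apply sum1; auto).
 assert (Hb1 : sumn n (fun j => b j ^2) = 1) by (apply sum1; auto).
 assert (Hc1 : sumn n (fun j => c j ^2) = 1) by (apply sum1; auto).
 assert (HS : 0 < S).
 { destruct (Sconst_nonneg n r Ustar) as [H|H]; auto. exfalso.
   assert (Hz : forall i, (i < n)%nat -> U i q = 0).
   { intros i Hi. assert (pow32 (rho i) <= S) by (apply (sumn_term_le n (fun i => pow32 (rho i))); auto; intros; apply pow32_nonneg, rownorm_nonneg).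
     pose proof (pow32_nonneg (rho i) (rownorm_nonneg r Ustar i)). fold S in H. 
     assert (pow32 (rho i) = 0) by lra. unfold pow32 in H2. apply Rmult_integral in H2.
     assert (rho i = 0). { destruct H2; auto. pose proof (Rhoi := proj1 (Hrho i Hi)). rewrite <- (sqrt_sqrt (rho i)) by auto. rewrite H2; ring. }
     pose proof (HUb i q Hi Hq). fold rho in H4. rewrite H3 in H4. apply Rabs_le_inv in H4. lra. }
   rewrite (sumn_ext n _ (fun _ => 0)) in HU1 by (intros; rewrite Hz; auto; ring). rewrite sumn_zero in HU1. lra. }
 pose proof (ln_ge_half n Hn2) as Hln.
 assert (HN : 0 < INR n) by (apply lt_0_INR; lia).
 set (mm := INR m).
 assert (HS2 : 0 < S^2) by (apply pow_lt; auto).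
 assert (Hmm : 0 < mm).
 { fold S mm in Hm. assert (0 < 8192 / gamma^2 * INR n * ln (INR n) * S^2).
   { assert (0 < 8192/gamma^2) by (unfold Rdiv; apply Rmult_lt_0_compat; [lra|apply Rinv_0_lt_compat, pow_lt; lra]).
     apply Rmult_lt_0_compat; auto. apply Rmult_lt_0_compat; [apply Rmult_lt_0_compat|]; auto; lra. }
   lra. }
 set (M := INR n * S^2 / mm).
 assert (HM0 : 0 < M) by (unfold M, Rdiv; apply Rmult_lt_0_compat; [apply Rmult_lt_0_compat; auto| apply Rinv_0_lt_compat; auto]).
 assert (HMb : M * (8192 * ln (INR n)) <= gamma^2).
 { fold S mm in Hm. unfold M. assert (0 < gamma^2) by (apply pow_lt; lra).
   replace (INR n * S ^ 2 / mm * (8192 * ln (INR n))) with ((8192 / gamma^2 * INR n * ln (INR n) * S^2) * gamma^2 / mm) by (field; lra).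
   apply Rmult_le_reg_r with mm; auto. unfold Rdiv. rewrite Rmult_assoc, Rinv_l, Rmult_1_r by lra. nra. }
 set (al := inner n (fun j => U j q) a). set (be := inner n (fun j => U j q) b).
 set (alpha := al * be).
 set (e := fun j k => alpha * U j q * U k q - a j * b k).
 assert (He2 : sumn n (fun j => sumn n (fun k => e j k ^ 2)) = 1 - alpha^2).
 { unfold e. rewrite (sumn_ext n _ (fun j => sumn n (fun k => (alpha^2 * U j q ^2) * (U k q ^2)) - 2 * alpha * sumn n (fun k => (U j q * a j) * (U k q * b k)) + sumn n (fun k => a j ^2 * b k ^2))).
   2:{ intros j _. rewrite <- sumn_scal, <- sumn_minus, <- sumn_plus. apply sumn_ext; intros; ring. }
   rewrite sumn_plus, sumn_minus, sumn_scal, !sumn_prod, sumn_scal, HU1, Ha1, Hb1.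
   fold (inner n (fun j => U j q) a). fold al. fold (inner n (fun j => U j q) b). fold be. unfold alpha. ring. }
 set (s := sqrt (1 - al^2*be^2)).
 assert (Hs2 : s^2 = 1 - alpha^2).
 { unfold s. replace (al^2*be^2) with (alpha^2) by (unfold alpha; ring).
   rewrite pow2_sqrt; auto. rewrite <- He2. apply sumn_nonneg; intros; apply sumsq_nonneg. }
 assert (Hs0 : 0 <= s) by apply sqrt_pos.
 assert (Hes : forall j k, (j < n)%nat -> (k < n)%nat -> Rabs (e j k) <= s).
 { intros j k Hj Hk. assert (e j k ^ 2 <= s^2).
   { rewrite Hs2, <- He2. apply Rle_trans with (sumn n (fun k => e j k ^2)).
     apply (sumn_term_le n (fun k => e j k ^ 2)); auto; intros; apply pow2_ge_0.
     apply (sumn_term_le n (fun j => sumn n (fun k => e j k ^ 2))); auto; intros; apply sumsq_nonneg. }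
   apply Rabs_le. split; nra. }
 set (coef := fun i j k => c i * U j q * U k q * e j k).
 set (v := fun i j k => Wgt n r Ustar m i j k * coef i j k).
 assert (Htr : forall i j k : nat, (i<n)%nat -> (j<n)%nat -> (k<n)%nat ->
   ph i j k * (1 - ph i j k) * (v i j k)^2 <= 48*M*c i^2*e j k^2 /\
   (ph i j k < 1 -> Rabs (v i j k) <= 8*M*Rabs (e j k)) /\ ph i j k * v i j k = coef i j k).
 { intros i j k Hi Hj Hk.
   pose proof (triple_bounds (rho i) (rho j) (rho k) (INR n) S mm (c i) (U j q) (U k q) (e j k)
     (Hrho i Hi) (Hrho j Hj) (Hrho k Hk) HN HS Hmm (Hcb i Hi) (HUb j q Hj Hq) (HUb k q Hk Hq)) as HT. cbv zeta in HT. exact HT. }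
 set (F := fun d => vnorm n (fun i => (al * be * Bdiag n r Ustar m U q d i - Rdiag n r Ustar m U q a b d i) * c i)).
 assert (HF : forall d, F d = vnorm n (Mv n ph v [] d)).
 { intros d. unfold F. apply vnorm_ext. intros i Hi. unfold Mv, Bdiag, Rdiag.
   rewrite <- sumn_scal, <- sumn_minus, Rmult_comm, <- sumn_scal. apply sumn_ext; intros j _.
   rewrite <- sumn_scal, <- sumn_minus, <- sumn_scal. apply sumn_ext; intros k _.
   unfold xb, mem. simpl existsb. cbv iota. unfold v, coef, e, alpha. ring. }
 assert (Hgood : forall d, good_event n r Ustar m U q a b c gamma d = if Rle_dec (F d) (gamma * s) then true else false) by reflexivity.
 set (T := triples n). set (d0 := fun _ _ _ : nat => false).
 set (Vm := lsum (vterm ph v) T).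
 assert (Hmean : forall i, (i<n)%nat -> Mv n ph v T d0 i = 0).
 { intros i Hi. unfold Mv. rewrite (sumn_ext n _ (fun j => sumn n (fun k => coef i j k))).
   - unfold coef, e.
     rewrite (sumn_ext n _ (fun j => sumn n (fun k => (c i * alpha * U j q ^2) * (U k q ^2)) - sumn n (fun k => (c i * (U j q * a j)) * (U k q * b k)))).
     + rewrite sumn_minus, !sumn_prod, sumn_scal, sumn_scal, HU1.
       fold (inner n (fun j => U j q) a). fold al. fold (inner n (fun j => U j q) b). fold be. unfold alpha. ring.
     + intros j _. rewrite <- sumn_minus. apply sumn_ext; intros; ring.
   - intros j Hj. apply sumn_ext; intros k Hk. unfold xb. rewrite (proj2 (mem_In _ _)) by (apply In_triples; auto). apply Htr; auto. }
 assert (HEF2 : expect ph T (fun d => F d ^ 2) d0 = Vm).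
 { rewrite (expect_ext ph T _ (fun d => sumn n (fun i => (Mv n ph v [] d i)^2))).
   - rewrite second_moment. rewrite (sumn_ext n _ (fun _ => 0)), sumn_zero. unfold Vm; ring.
     intros; rewrite Hmean; auto; ring. apply NoDup_triples. intros; apply In_triples; auto.
   - intros d. rewrite HF. unfold vnorm. rewrite pow2_sqrt; auto. apply sumsq_nonneg. }
 assert (HVm : Vm <= 48*M*s^2).
 { unfold Vm, T. rewrite lsum_triples. apply Rle_trans with (sumn n (fun i => sumn n (fun j => sumn n (fun k => 48*M*c i^2*e j k^2)))).
   - apply sumn_le; intros i Hi; apply sumn_le; intros j Hj; apply sumn_le; intros k Hk. unfold vterm. apply Htr; auto.
   - right. rewrite (sumn_ext n _ (fun i => (48*M) * c i^2 * (1 - alpha^2))).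
     + rewrite <- Hs2. rewrite (sumn_ext n _ (fun i => (48*M*s^2) * c i ^2)) by (intros; ring).
       rewrite sumn_scal, Hc1. ring.
     + intros i _. rewrite <- He2. rewrite <- sumn_scal. apply sumn_ext; intros j _. rewrite <- sumn_scal. apply sumn_ext; intros; ring. }
 assert (HEF : expect ph T F d0 <= sqrt Vm).
 { set (mu := expect ph T F d0).
   assert (H0 : 0 <= expect ph T (fun d => (F d - mu)^2) d0).
   { apply Rle_trans with (expect ph T (fun _ => 0) d0). rewrite expect_const; lra.
     apply expect_mono; auto. intros; apply pow2_ge_0. }
   assert (H1 : expect ph T (fun d => (F d - mu)^2) d0 = Vm - mu^2).
   { rewrite (expect_ext ph T _ (fun d => 1 * (F d ^ 2) + 1 * ((-2*mu) * F d + mu^2 * 1))) by (intros; ring).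
     rewrite expect_lin. rewrite (expect_lin ph T F (fun _ => 1)). rewrite expect_const, HEF2. fold mu. ring. }
   destruct (Rle_or_lt mu 0). pose proof (sqrt_pos Vm); lra.
   rewrite <- (sqrt_pow2 mu) by lra. apply sqrt_le_1_alt. lra. }
 assert (HprobE : prob n ph (good_event n r Ustar m U q a b c gamma) = expect ph T (fun d => if good_event n r Ustar m U q a b c gamma d then 1 else 0) d0) by reflexivity.
 assert (Hpow : 0 < INR n ^ 10) by (apply pow_lt; auto).
 assert (Hipow : 0 < / INR n ^ 10) by (apply Rinv_0_lt_compat; auto).
 destruct (Req_dec s 0) as [Hs|Hs].
 -
   assert (HF0 : forall d, F d = 0).
   { intros d. rewrite HF. unfold vnorm. rewrite (sumn_ext n _ (fun _ => 0)). rewrite sumn_zero, sqrt_0; auto.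
     intros i Hi. unfold Mv. rewrite (sumn_ext n _ (fun _ => 0)). rewrite sumn_zero; ring.
     intros j Hj. rewrite (sumn_ext n _ (fun _ => 0)). apply sumn_zero.
     intros k Hk. pose proof (Hes j k Hj Hk). rewrite Hs in H. pose proof (Rabs_pos (e j k)).
     assert (e j k = 0) by (apply Rabs_le_inv in H; lra). unfold v, coef. rewrite H1. ring. }
   rewrite HprobE. rewrite (expect_ext ph T _ (fun _ => 1)). rewrite expect_const. lra.
   intros d. rewrite Hgood, HF0, Hs. destruct (Rle_dec 0 (gamma*0)); auto. exfalso; apply n0; lra.
 - assert (Hsp : 0 < s) by (destruct Hs0; auto; congruence).
   set (lam := gamma / (256*M*s)).
   assert (Hlam : 0 < lam) by (unfold lam, Rdiv; apply Rmult_lt_0_compat; [lra|apply Rinv_0_lt_compat; apply Rmult_lt_0_compat; [apply Rmult_lt_0_compat|]; lra]).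
   assert (Hmart : expect ph T (fun d => exp (lam * F d)) d0 <= exp (lam * expect ph T F d0 + 2*lam^2 * Vm)).
   { replace Vm with (lsum (vterm ph (fun i j k => Rabs (v i j k))) T).
     2:{ unfold Vm. apply lsum_ext. intros [[i j] k]. unfold vterm. rewrite pow2_abs. auto. }
     apply exp_mart; auto. lra. apply NoDup_triples.
     - intros i j k Hin d. apply In_triples in Hin. destruct Hin as [Hi [Hj Hk]].
       rewrite !HF.
       rewrite (vnorm_ext n (Mv n ph v [] (upd d (i,j,k) true)) (fun i' => Mv n ph v [] (upd d (i,j,k) false) i' + (if Nat.eqb i' i then v i j k else 0))).
       + apply vnorm_pert; auto.
       + intros i' Hi'. rewrite !Mv_upd by auto. destruct (Nat.eqb i' i); simpl; ring.
     - intros i j k Hin Hlt. apply In_triples in Hin. destruct Hin as [Hi [Hj Hk]].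
       destruct (Htr i j k Hi Hj Hk) as [_ [H2 _]]. specialize (H2 Hlt). pose proof (Hes j k Hj Hk).
       apply Rle_trans with (lam * (8*M*s)).
       + apply Rmult_le_compat_l; [lra|]. apply Rle_trans with (8*M*Rabs (e j k)); auto.
         apply Rmult_le_compat_l; lra.
       + unfold lam. replace (gamma / (256 * M * s) * (8 * M * s)) with (gamma/32) by (field; lra). lra. }
   assert (Hchern : expect ph T (fun d => if good_event n r Ustar m U q a b c gamma d then 1 else 0) d0 >=
                    1 - exp (- (lam * (gamma*s))) * expect ph T (fun d => exp (lam * F d)) d0).
   { apply Rle_ge. apply Rle_trans with (expect ph T (fun d => 1 * 1 + (- exp (- (lam * (gamma*s)))) * exp (lam * F d)) d0).
     - rewrite (expect_lin ph T (fun _ => 1) (fun d => exp (lam * F d)) 1 (- exp (- (lam * (gamma*s))))).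
       rewrite expect_const. lra.
     - apply expect_mono; auto. intros d. rewrite Hgood. destruct (Rle_dec (F d) (gamma*s)).
       + pose proof (exp_pos (- (lam * (gamma * s)))). pose proof (exp_pos (lam * F d)).
         assert (0 <= exp (- (lam * (gamma * s))) * exp (lam * F d)) by (apply Rmult_le_pos; lra).
         replace (1 * 1 + - exp (- (lam * (gamma * s))) * exp (lam * F d)) with (1 - exp (- (lam * (gamma * s))) * exp (lam * F d)) by ring. lra.
       + replace (1 * 1 + - exp (- (lam * (gamma * s))) * exp (lam * F d)) with (1 - exp (- (lam * (gamma * s)) + lam * F d)) by (rewrite exp_plus; ring).
         pose proof (exp_ineq1_le (- (lam * (gamma * s)) + lam * F d)).
         assert (0 <= - (lam * (gamma * s)) + lam * F d) by nra. lra. }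
   set (mu := expect ph T F d0) in *.
   assert (HM1 : M * 4096 <= gamma^2) by nra.
   assert (Hsq : sqrt Vm <= s * gamma / 4).
   { apply Rle_trans with (sqrt ((s*gamma/4)^2)).
     - apply sqrt_le_1_alt. apply Rle_trans with (48*M*s^2); auto.
       replace ((s*gamma/4)^2) with (s^2 * gamma^2/16) by field.
       assert (0 <= s^2) by apply pow2_ge_0. nra.
     - rewrite sqrt_pow2; [lra|]. apply Rmult_le_pos; [apply Rmult_le_pos|]; lra. }
   assert (Hexp : - (lam * (gamma*s)) + (lam * mu + 2*lam^2*Vm) <= - (10 * ln (INR n))).
   { assert (lam * mu <= lam * (s*gamma/4)) by (apply Rmult_le_compat_l; lra).
     assert (2*lam^2*Vm <= 2*lam^2*(48*M*s^2)) by (apply Rmult_le_compat_l; [nra|auto]).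
     assert (Hid : - (lam * (gamma*s)) + lam * (s*gamma/4) + 2*lam^2*(48*M*s^2) = - (3/2048) * (gamma^2 / M)).
     { unfold lam. field. lra. }
     assert (8192 * ln (INR n) <= gamma^2/M).
     { apply Rmult_le_reg_r with M; auto. replace (gamma^2/M*M) with (gamma^2) by (field; lra). lra. }
     lra. }
   rewrite HprobE.
   apply Rge_trans with (1 - exp (- (lam * (gamma*s))) * expect ph T (fun d => exp (lam * F d)) d0); auto.
   apply Rle_ge.
   apply Rle_trans with (1 - exp (- (lam * (gamma*s))) * exp (lam * mu + 2*lam^2 * Vm)).
   2:{ pose proof (exp_pos (- (lam * (gamma*s)))). apply Rplus_le_compat_l. apply Ropp_le_contravar.
       apply Rmult_le_compat_l; lra. }
   rewrite <- exp_plus.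
   assert (exp (- (lam * (gamma * s)) + (lam * mu + 2 * lam ^ 2 * Vm)) <= / INR n ^ 10).
   { apply Rle_trans with (exp (- (10 * ln (INR n)))).
     - destruct (Rle_lt_or_eq_dec _ _ Hexp) as [Hl|Hl]; [left; apply exp_increasing; auto| rewrite Hl; lra].
     - rewrite exp_Ropp. replace (10 * ln (INR n)) with (ln (INR n ^ 10)). rewrite exp_ln; auto. lra.
       rewrite ln_pow by auto. simpl INR. ring. }
   lra.
Qed.

Theorem mainTheorem7 :
  exists C : R, C > 0 /\
  forall (n r : nat) (Ustar U : nat -> nat -> R) (q : nat) (a b c : nat -> R)
         (gamma : R) (m : nat),
    orthonormal_cols n r Ustar ->
    (forall l, (l < r)%nat -> vnorm n (fun i => U i l) = 1) ->
    (forall i l, (i < n)%nat -> (l < r)%nat -> Rabs (U i l) <= 2 * rownorm r Ustar i) ->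
    (q < r)%nat ->
    vnorm n a = 1 -> vnorm n b = 1 -> vnorm n c = 1 ->
    (forall i, (i < n)%nat ->
       Rabs (a i) <= 2 * rownorm r Ustar i /\
       Rabs (b i) <= 2 * rownorm r Ustar i /\
       Rabs (c i) <= 2 * rownorm r Ustar i) ->
    0 < gamma <= 1 ->
    INR m >= C / gamma ^ 2 * INR n * ln (INR n) * (Sconst n r Ustar) ^ 2 ->
    prob n (phat n r Ustar m) (good_event n r Ustar m U q a b c gamma)
      >= 1 - / (INR n ^ 10).
Proof.
 exists 8192. split; [lra|].
 intros n r Ustar U q a b c gamma m Ho HU HUb Hq Ha Hb Hc Habc Hg Hm.
 destruct n as [|[|n']].
 - unfold vnorm in Ha. simpl in Ha. rewrite sqrt_0 in Ha. lra.
 - simpl. replace (1 * (1 * (1 * (1 * (1 * (1 * (1 * (1 * (1 * (1 * 1)))))))))) with 1 by ring.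
   rewrite Rinv_1. apply Rle_ge. replace (1 - 1) with 0 by ring. apply prob_nonneg. intros; apply phat_range.
 - apply main_n2; auto. lia. intros i Hi; apply Habc; auto.
Qed.
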